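(* Let $d$ be a positive integer, let $z\in\mathbb{S}^d\subset\mathbb{R}^{d+1}$, and identify $\mathbb{S}^{d-1}$ with $\mathbb{S}^d\cap z^\perp$ (the unit sphere of the $d$-dimensional subspace $z^\perp$). Define $f:\mathbb{S}^{d-1}\to\mathbb{S}^d$ by $$f(x)=\sqrt{\tfrac{d}{d+1}}\,x+\tfrac{1}{\sqrt{d+1}}\,z,$$ and for a Borel probability measure $\mu$ on $\mathbb{S}^{d-1}$ let $\mu_l=f_*\mu$ be its pushforward. Then $\mu$ is balanced and isotropic on $\mathbb{S}^{d-1}$ if and only if $\mu_l$ is isotropic on $\mathbb{S}^d$.
   Context: A Borel probability measure $\nu$ on the unit sphere $\mathbb{S}^{n-1}$ of an $n$-dimensional Euclidean space is isotropic if $\int\langle x,y\rangle^2\,d\nu(x)=\frac1n$ for every unit vector $y$ in that space, and balanced if $\int x\,d\nu(x)=0$. *)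

(* Defs.v *)
From HB Require Import structures.
From mathcomp Require Import all_boot all_order all_algebra.
From mathcomp Require Import all_classical all_reals all_analysis.
Import numFieldNormedType.Exports.
Import Order.TTheory GRing.Theory Num.Theory.

Set Implicit Arguments.
Unset Strict Implicit.
Unset Printing Implicit Defensive.

Local Open Scope ring_scope.
Local Open Scope classical_set_scope.

(* Euclidean space R^n is represented by row vectors 'rV[R]_n, equipped with
   the Borel sigma-algebra, i.e. the sigma-algebra generated by the open sets
   of its (product) topology. *)
Definition borelV (R : realType) (n : nat) :=
  g_sigma_algebraType (@open 'rV[R]_n).

Definition dotv (R : realType) (n : nat) (u v : 'rV[R]_n) : R :=
  \sum_(i < n) u 0 i * v 0 i.


Definition usphere_perp (R : realType) (n : nat) (z : 'rV[R]_n) : set 'rV[R]_n :=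
  [set x | dotv x x = 1 /\ dotv x z = 0].

Definition concentrated_on (R : realType) (n : nat)
  (mu : {measure set (borelV R n) -> \bar R}) (S : set 'rV[R]_n) : Prop :=
  mu (~` S) = 0%E.

Definition isotropic (R : realType) (n : nat)
  (mu : {measure set (borelV R n) -> \bar R}) : Prop :=
  forall y : 'rV[R]_n, dotv y y = 1 ->
    (\int[mu]_x ((dotv x y) ^+ 2)%:E = (n%:R^-1)%:E)%E.

Definition isotropic_perp (R : realType) (n : nat) (k : nat) (z : 'rV[R]_n)
  (mu : {measure set (borelV R n) -> \bar R}) : Prop :=
  forall y : 'rV[R]_n, dotv y y = 1 -> dotv y z = 0 ->
    (\int[mu]_x ((dotv x y) ^+ 2)%:E = (k%:R^-1)%:E)%E.

(* balanced: int x dmu(x) = 0, i.e. every coordinate of the (vector) integral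
   vanishes *)
Definition balanced (R : realType) (n : nat)
  (mu : {measure set (borelV R n) -> \bar R}) : Prop :=
  forall i : 'I_n, (\int[mu]_x (x 0 i)%:E = 0)%E.

Definition liftf (R : realType) (d : nat) (z : 'rV[R]_d.+1) (x : 'rV[R]_d.+1)
  : 'rV[R]_d.+1 :=
  Num.sqrt (d%:R / d.+1%:R) *: x + (Num.sqrt d.+1%:R)^-1 *: z.

Section pushforward_lift.
Variables (R : realType) (d : nat) (z : 'rV[R]_d.+1).

Lemma liftf_continuous : continuous (liftf z).
Proof.
move=> x.
apply: (@continuousD _ _ _ (fun x : 'rV[R]_d.+1 => Num.sqrt (d%:R / d.+1%:R) *: x)
  (fun=> (Num.sqrt d.+1%:R)^-1 *: z)).
  exact: continuousZr.
exact: cst_continuous.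
Qed.

Lemma measurable_liftf :
  measurable_fun [set: borelV R d.+1] (liftf z : borelV R d.+1 -> borelV R d.+1).
Proof.
apply: (@measurability _ _ (borelV R d.+1) (borelV R d.+1) setT (liftf z) (@open 'rV[R]_d.+1)) => //.
move=> _ [A oA <-]; rewrite setTI.
apply: sub_sigma_algebra.
by move/continuousP : liftf_continuous; apply.
Qed.

Variable mu : {measure set (borelV R d.+1) -> \bar R}.

Definition lift_measure : set (borelV R d.+1) -> \bar R :=
  pushforward mu (liftf z : borelV R d.+1 -> borelV R d.+1).

Let lift0 : lift_measure set0 = 0%E.
Proof. by rewrite /lift_measure /pushforward preimage_set0 measure0. Qed.

Let lift_ge0 A : (0 <= lift_measure A)%E.
Proof. by rewrite /lift_measure /pushforward; exact: measure_ge0. Qed.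

Let lift_sigma_additive : semi_sigma_additive lift_measure.
Proof.
move=> F mF tF mUF; rewrite /lift_measure /pushforward preimage_bigcup.
apply: measure_semi_sigma_additive.
- by move=> n; rewrite -[X in measurable X]setTI; exact: measurable_liftf.
- apply/trivIsetP => /= i j _ _ ij; rewrite -preimage_setI.
  by move/trivIsetP : tF => /(_ _ _ _ _ ij) ->//; rewrite preimage_set0.
- by rewrite -preimage_bigcup -[X in measurable X]setTI; exact: measurable_liftf.
Qed.

HB.instance Definition _ := isMeasure.Build _ _ _
  lift_measure lift0 lift_ge0 lift_sigma_additive.

End pushforward_lift.

(* Main.v *)
Require Import Defs.
From HB Require Import structures.
From mathcomp Require Import all_boot all_order all_algebra.
From mathcomp Require Import all_classical all_reals all_analysis.
From mathcomp Require Import ring lra.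
From mathcomp Require Import measurable_realfun.
Import numFieldNormedType.Exports.
Import Order.TTheory GRing.Theory Num.Theory.
Local Open Scope ring_scope.
Local Open Scope classical_set_scope.
Set Implicit Arguments.
Unset Strict Implicit.
Section dot.
Variables (R : realType) (n : nat).
Implicit Types x y w : 'rV[R]_n.

Lemma dotvC x y : dotv x y = dotv y x.
Proof. by rewrite /dotv; apply: eq_bigr => i _; rewrite mulrC. Qed.

Lemma dotvDr x y w : dotv x (y + w) = dotv x y + dotv x w.
Proof. by rewrite /dotv -big_split; apply: eq_bigr => i _; rewrite mxE mulrDr. Qed.

Lemma dotvZr x y c : dotv x (c *: y) = c * dotv x y.
Proof. by rewrite /dotv mulr_sumr; apply: eq_bigr => i _; rewrite mxE mulrCA. Qed.

Lemma dotvBr x y w : dotv x (y - w) = dotv x y - dotv x w.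
Proof. by rewrite /dotv -sumrB; apply: eq_bigr => i _; rewrite !mxE mulrBr. Qed.

Lemma dotvDl x y w : dotv (y + w) x = dotv y x + dotv w x.
Proof. by rewrite dotvC dotvDr !(dotvC x). Qed.

Lemma dotvZl x y c : dotv (c *: y) x = c * dotv y x.
Proof. by rewrite dotvC dotvZr dotvC. Qed.

Lemma dotv0r x : dotv x 0 = 0.
Proof. by rewrite /dotv big1 // => i _; rewrite mxE mulr0. Qed.

Lemma dotv_delta x (i : 'I_n) : dotv x (delta_mx 0 i) = x 0 i.
Proof.
rewrite /dotv (bigD1 i) //= big1 ?addr0.
  by rewrite mxE !eqxx mulr1.
by move=> j ji; rewrite mxE (negbTE ji) andbF mulr0.
Qed.

Lemma dotv_ge0 x : 0 <= dotv x x.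
Proof. by rewrite /dotv sumr_ge0 // => i _; rewrite -expr2 sqr_ge0. Qed.

Lemma dotv_eq0 x : dotv x x = 0 -> x = 0.
Proof.
move=> /eqP; rewrite /dotv psumr_eq0; last by move=> i _; rewrite -expr2 sqr_ge0.
move=> /allP H; apply/rowP => i; rewrite mxE.
have := H i (mem_index_enum _); rewrite /= -expr2 sqrf_eq0 => /eqP //.
Qed.

Lemma coord_le1 x (i : 'I_n) : dotv x x = 1 -> `|x 0 i| <= 1.
Proof.
move=> h.
have : x 0 i ^+ 2 <= 1.
  rewrite -h /dotv (bigD1 i) //= expr2 lerDl sumr_ge0 // => j _.
  by rewrite -expr2 sqr_ge0.
move=> h2; rewrite ler_norml; apply/andP; split; nra.
Qed.

Lemma dotv_bound x y : dotv x x = 1 -> `|dotv x y| <= \sum_(i < n) `|y 0 i|.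
Proof.
move=> h; rewrite /dotv; apply: (le_trans (ler_norm_sum _ _ _)).
apply: ler_sum => i _; rewrite normrM.
rewrite -[leRHS]mul1r; apply: ler_wpM2r => //; exact: coord_le1.
Qed.

End dot.
Section meas.
Variables (R : realType) (n : nat).
Local Notation V := (borelV R n).

Lemma cont_meas (g : 'rV[R]_n -> R) : continuous g ->
  measurable_fun [set: V] (g : V -> R).
Proof.
move=> /continuousP cg.
apply: (measurability _ (measurable_realfun.RGenOpens.measurableE R)).
move=> _ [_ [a [b ->] <-]]; rewrite setTI.
apply: sub_sigma_algebra; apply: cg; exact: interval_open.
Qed.

Lemma coord_meas (i : 'I_n) :
  measurable_fun [set: V] (fun x : V => (x : 'rV[R]_n) 0 i).
Proof. apply: cont_meas; exact: coord_continuous. Qed.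

Lemma dot_meas (y : 'rV[R]_n) :
  measurable_fun [set: V] (fun x : V => dotv x y).
Proof.
rewrite /dotv; apply: measurable_sum => i; apply: measurable_realfun.measurable_funM.
  exact: coord_meas.
exact: measurable_cst.
Qed.

Lemma dot2_meas :
  measurable_fun [set: V] (fun x : V => dotv x x).
Proof.
rewrite /dotv; apply: measurable_sum => i; apply: measurable_realfun.measurable_funM; exact: coord_meas.
Qed.

Lemma dotE_meas (y : 'rV[R]_n) :
  measurable_fun [set: V] (fun x : V => (dotv x y)%:E).
Proof. apply/measurable_realfun.measurable_EFinP; exact: dot_meas. Qed.

Lemma dotsqE_meas (y : 'rV[R]_n) :
  measurable_fun [set: V] (fun x : V => ((dotv x y) ^+ 2)%:E).
Proof. apply/measurable_realfun.measurable_EFinP; apply: measurable_realfun.measurable_funX; exact: dot_meas. Qed.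

Lemma sphere_meas (z : 'rV[R]_n) : measurable (usphere_perp z : set V).
Proof.
have -> : (usphere_perp z : set V) =
  ([set: V] `&` (fun x : V => dotv x x) @^-1` [set 1]) `&`
  ([set: V] `&` (fun x : V => dotv x z) @^-1` [set 0]).
  by apply/seteqP; split => x /=; rewrite /usphere_perp /=; [case=> -> ->|case=> [[_ ->] [_ ->]]].
apply: measurableI.
  by apply: dot2_meas => //; exact: measurable_set1.
by apply: dot_meas => //; exact: measurable_set1.
Qed.

Variables (mu : probability V R) (S : set V) (mS : measurable S)
  (hS : mu (~` S) = 0%E).

Lemma aeS (P : V -> Prop) : (forall x, S x -> P x) -> {ae mu, forall x, P x}.
Proof.
move=> SP; exists (~` S); split => //; first exact: measurableC.
by move=> x /= nPx Sx; apply: nPx; exact: SP.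
Qed.

Lemma int_bounded (g : V -> R) (M : R) : 0 <= M -> measurable_fun setT g ->
  (forall x, S x -> `|g x| <= M) -> mu.-integrable setT (EFin \o g).
Proof.
move=> M0 mg gM; apply/integrableP; split; first exact/measurable_realfun.measurable_EFinP.
apply: (@le_lt_trans _ _ (\int[mu]_(x in setT) (cst M%:E) x)%E).
  apply: (ae_ge0_le_integral measurableT).
  - by move=> x _.
  - apply: measurableT_comp => //; exact/measurable_realfun.measurable_EFinP.
  - by move=> x _; rewrite lee_fin.
  - exact: measurable_cst.
  - by apply: aeS => x Sx _; rewrite /= lee_fin; exact: gM.
rewrite integral_cst //.
rewrite [X in (_ * X)%E](_ : _ = 1%E); first by rewrite mule1 ltry.
exact: probability_setT.
Qed.

Lemma int_eqS (g h : V -> \bar R) : measurable_fun setT g -> measurable_fun setT h ->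
  (forall x, S x -> g x = h x) -> (\int[mu]_x g x = \int[mu]_x h x)%E.
Proof. move=> mg mh gh; apply: ae_eq_integral => //; apply: aeS => x Sx _; exact: gh. Qed.

End meas.

Section main.
Variables (R : realType) (d : nat) (z : 'rV[R]_d.+1) (hz : dotv z z = 1)
  (mu : probability (borelV R d.+1) R)
  (hmu : concentrated_on mu (usphere_perp z)).
Local Notation V := (borelV R d.+1).

Let mS : measurable (usphere_perp z : set V) := sphere_meas z.
Let hS : mu (~` (usphere_perp z : set V)) = 0%E := hmu.

Lemma intL (y : 'rV[R]_d.+1) : mu.-integrable setT (fun x : V => (dotv x y)%:E).
Proof.
apply: (int_bounded mS hS (M := \sum_(i < d.+1) `|y 0 i|)).
- by apply: sumr_ge0 => i _.
- exact: dot_meas.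
- by move=> x [hx _]; exact: dotv_bound.
Qed.

Lemma intQ (y : 'rV[R]_d.+1) : mu.-integrable setT (fun x : V => ((dotv x y)^+2)%:E).
Proof.
apply: (int_bounded mS hS (M := (\sum_(i < d.+1) `|y 0 i|)^+2)).
- exact: sqr_ge0.
- apply: measurable_realfun.measurable_funX; exact: dot_meas.
- move=> x [hx _]; have := dotv_bound y hx.
  set m := \sum_(i < d.+1) _; set a := dotv x y => h.
  rewrite ger0_norm ?sqr_ge0 //; move: h; rewrite ler_norml => /andP[h1 h2].
  nra.
Qed.

Definition Lr (y : 'rV[R]_d.+1) := fine (\int[mu]_x (dotv x y)%:E)%E.
Definition Qr (y : 'rV[R]_d.+1) := fine (\int[mu]_x ((dotv x y)^+2)%:E)%E.

Lemma LE y : (\int[mu]_x (dotv x y)%:E)%E = (Lr y)%:E.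
Proof. by rewrite /Lr fineK // integrable_fin_num //; exact: intL. Qed.

Lemma QE y : (\int[mu]_x ((dotv x y)^+2)%:E)%E = (Qr y)%:E.
Proof. by rewrite /Qr fineK // integrable_fin_num //; exact: intQ. Qed.

Lemma L_add y w : Lr (y + w) = Lr y + Lr w.
Proof.
apply: EFin_inj; rewrite -LE EFinD -!LE -(integralD measurableT (intL y) (intL w)).
by apply: eq_integral => x _; rewrite dotvDr EFinD.
Qed.

Lemma L_scale c y : Lr (c *: y) = c * Lr y.
Proof.
apply: EFin_inj; rewrite -LE EFinM -LE -(integralZl measurableT (intL y)).
by apply: eq_integral => x _; rewrite dotvZr EFinM.
Qed.

Lemma Q_scale c y : Qr (c *: y) = c ^+ 2 * Qr y.
Proof.
apply: EFin_inj; rewrite -QE EFinM -QE -(integralZl measurableT (intQ y)).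
by apply: eq_integral => x _; rewrite dotvZr -EFinM exprMn.
Qed.

Lemma L_z : Lr z = 0.
Proof.
apply: EFin_inj; rewrite -LE (int_eqS mS hS (h := cst 0%E)).
- exact: integral0.
- exact: dotE_meas.
- exact: measurable_cst.
- by move=> x [_ ->].
Qed.

Lemma Q_perp y : Qr y = Qr (y - dotv y z *: z).
Proof.
apply: EFin_inj; rewrite -!QE; apply: (int_eqS mS hS).
- exact: dotsqE_meas.
- exact: dotsqE_meas.
- by move=> x [_ hx]; rewrite dotvBr dotvZr hx mulr0 subr0.
Qed.

Definition ca := Num.sqrt (d%:R / d.+1%:R) : R.
Definition cb := (Num.sqrt d.+1%:R)^-1 : R.

Lemma lift_int y :
  (\int[lift_measure z mu]_x ((dotv x y)^+2)%:E)%E =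
  (ca ^+ 2 * Qr y + 2 * ca * cb * dotv z y * Lr y + cb ^+ 2 * (dotv z y) ^+ 2)%:E.
Proof.
have -> : (\int[lift_measure z mu]_x ((dotv x y)^+2)%:E)%E =
    (\int[mu]_x ((dotv (liftf z x) y)^+2)%:E)%E.
  have h := ge0_integral_pushforward (measurable_liftf z) mu measurableT
    (dotsqE_meas y).
  rewrite preimage_setT in h; apply: h => x _; by rewrite lee_fin sqr_ge0.
set t := dotv z y.
transitivity (\int[mu]_x (((ca ^+ 2)%:E * ((dotv x y)^+2)%:E
    + (2 * ca * cb * t)%:E * (dotv x y)%:E) + (cb ^+ 2 * t ^+ 2)%:E))%E.
  apply: eq_integral => x _.
  rewrite /liftf dotvDl !dotvZl -/t -!EFinM -!EFinD; congr EFin.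
  by rewrite /ca /cb; ring.
have iQ : mu.-integrable setT (fun x : V => (ca ^+ 2)%:E * ((dotv x y)^+2)%:E)%E.
  apply: integrableZl => //; exact: intQ.
have iL : mu.-integrable setT (fun x : V => (2 * ca * cb * t)%:E * (dotv x y)%:E)%E.
  apply: integrableZl => //; exact: intL.
have iC : mu.-integrable setT (fun x : V => (cb ^+ 2 * t ^+ 2)%:E).
  apply: (int_bounded mS hS (g := fun _ => cb ^+ 2 * t ^+ 2)
    (M := `|cb ^+ 2 * t ^+ 2|)) => //; exact: measurable_cst.
rewrite (integralD measurableT (integrableD measurableT iQ iL) iC).
rewrite (integralD measurableT iQ iL).
rewrite (integralZl measurableT (intQ y)) (integralZl measurableT (intL y)).
rewrite integral_cst // QE LE.
rewrite [X in ((cb ^+ 2 * t ^+ 2)%:E * X)%E](_ : _ = 1%E); last exact: probability_setT.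
by rewrite mule1 -!EFinM -!EFinD.
Qed.


Lemma intC (i : 'I_d.+1) : mu.-integrable setT (fun x : V => ((x : 'rV[R]_d.+1) 0 i)%:E).
Proof.
apply: (int_bounded mS hS (g := fun x : V => (x : 'rV[R]_d.+1) 0 i) (M := 1)) => //.
- exact: coord_meas.
- by move=> x [hx _]; exact: coord_le1.
Qed.

Lemma L_all0 (bal : balanced mu) y : Lr y = 0.
Proof.
apply: EFin_inj; rewrite -LE.
transitivity (\int[mu]_x (\sum_(i < d.+1) (y 0 i)%:E * ((x : 'rV[R]_d.+1) 0 i)%:E))%E.
  apply: eq_integral => x _; rewrite /dotv -sumEFin; apply: eq_bigr => i _.
  by rewrite -EFinM mulrC.
have hi : forall i, mu.-integrable setT
    (fun (x : V) => (y 0 i)%:E * ((x : 'rV[R]_d.+1) 0 i)%:E)%E.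
  move=> i; apply: integrableZl => //; exact: intC.
rewrite (integral_sum measurableT hi).
rewrite big1 // => i _; rewrite (integralZl measurableT (intC i)) bal.
by rewrite mule0.
Qed.

Lemma Q0 : Qr 0 = 0.
Proof. by have := Q_scale 0 0; rewrite scale0r expr0n /= mul0r. Qed.

Lemma L0 : Lr 0 = 0.
Proof. by have := L_scale 0 0; rewrite scale0r mul0r. Qed.

Lemma normalize (v : 'rV[R]_d.+1) : v != 0 ->
  exists u c, [/\ v = c *: u, dotv u u = 1, c ^+ 2 = dotv v v
     & dotv v z = 0 -> dotv u z = 0].
Proof.
move=> v0.
have s0 : 0 < dotv v v.
  rewrite lt_def dotv_ge0 andbT; apply/negP => /eqP /dotv_eq0 h.
  by rewrite h eqxx in v0.
set s := dotv v v in s0 *.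
have r0 : 0 < Num.sqrt s by rewrite sqrtr_gt0.
exists ((Num.sqrt s)^-1 *: v), (Num.sqrt s); split.
- by rewrite scalerA mulfV ?scale1r // gt_eqF.
- rewrite dotvZl dotvZr -/s mulrA -expr2 exprVn sqr_sqrtr ?ltW // mulVf //.
  by rewrite gt_eqF.
- by rewrite sqr_sqrtr // ltW.
- by move=> h; rewrite dotvZl h mulr0.
Qed.

Lemma dotvBl (x y w : 'rV[R]_d.+1) : dotv (y - w) x = dotv y x - dotv w x.
Proof. by rewrite dotvC dotvBr !(dotvC x). Qed.

Lemma Qperp_val (hd : (0 < d)%N) (iso : isotropic_perp d z mu) v :
  dotv v z = 0 -> Qr v = dotv v v / d%:R.
Proof.
move=> vz; have [->|v0] := eqVneq v 0; first by rewrite Q0 dotv0r mul0r.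
have [u [c [vE uu c2 _]]] := normalize v0.
have uz : dotv u z = 0.
  move: vz; rewrite vE dotvZl => /eqP; rewrite mulf_eq0 => /orP[/eqP c0|/eqP //].
  by move: v0; rewrite vE c0 scale0r eqxx.
rewrite vE Q_scale dotvZl dotvZr uu mulr1 -expr2.
have h := iso u uu uz; rewrite QE in h; have -> : Qr u = d%:R^-1 by case: h.
by [].
Qed.

Lemma Lperp0 (H : forall u, dotv u u = 1 -> dotv u z = 0 -> Lr u = 0) v :
  dotv v z = 0 -> Lr v = 0.
Proof.
move=> vz; have [->|v0] := eqVneq v 0; first exact: L0.
have [u [c [vE uu c2 _]]] := normalize v0.
have uz : dotv u z = 0.
  move: vz; rewrite vE dotvZl => /eqP; rewrite mulf_eq0 => /orP[/eqP c0|/eqP //].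
  by move: v0; rewrite vE c0 scale0r eqxx.
by rewrite vE L_scale H // mulr0.
Qed.

Lemma ca2 : ca ^+ 2 = d%:R / d.+1%:R.
Proof. by rewrite /ca sqr_sqrtr // divr_ge0. Qed.

Lemma cb2 : cb ^+ 2 = d.+1%:R^-1.
Proof. by rewrite /cb exprVn sqr_sqrtr. Qed.

Lemma main_fwd (hd : (0 < d)%N) :
  balanced mu /\ isotropic_perp d z mu -> isotropic (lift_measure z mu).
Proof.
move=> [bal iso] y hy.
rewrite lift_int L_all0 // mulr0 addr0 (Q_perp y).
set t := dotv y z; set v := y - t *: z.
have vz : dotv v z = 0 by rewrite dotvBl dotvZl hz mulr1 subrr.
have vv : dotv v v = 1 - t ^+ 2.
  rewrite {1}/v dotvBl dotvZl (dotvC z v) vz mulr0 subr0 /v dotvBr dotvZr hy -/t.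
  by rewrite expr2.
rewrite (Qperp_val hd iso vz) vv (dotvC z y) -/t ca2 cb2; congr EFin.
have D0 : d%:R != 0 :> R by rewrite pnatr_eq0 -lt0n.
have D1 : d.+1%:R != 0 :> R by rewrite pnatr_eq0.
rewrite -natr1 in D1 *.
by field; rewrite ?D0 ?D1 ?D1'.
Qed.

Lemma main_bwd (hd : (0 < d)%N) :
  isotropic (lift_measure z mu) -> balanced mu /\ isotropic_perp d z mu.
Proof.
move=> isol.
have D0 : d%:R != 0 :> R by rewrite pnatr_eq0 -lt0n.
have D1 : d.+1%:R != 0 :> R by rewrite pnatr_eq0.
have D1' : 1 + d%:R != 0 :> R by rewrite nat1r.
have key y : dotv y y = 1 -> ca ^+ 2 * Qr y + 2 * ca * cb * dotv z y * Lr y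
    + cb ^+ 2 * dotv z y ^+ 2 = d.+1%:R^-1.
  by move=> hy; apply: EFin_inj; rewrite -lift_int; exact: isol.
have Qu u : dotv u u = 1 -> dotv u z = 0 -> Qr u = d%:R^-1.
  move=> hu uz; have := key u hu; rewrite dotvC uz !mulr0 mul0r expr0n /= mulr0 !addr0.
  rewrite ca2 => h.
  have -> : Qr u = d.+1%:R / d%:R * (d%:R / d.+1%:R * Qr u).
    by field; rewrite ?D0 ?D1 ?D1'.
  by rewrite h; field; rewrite ?D0 ?D1 ?D1'.
have isoP : isotropic_perp d z mu.
  by move=> u hu uz; rewrite QE Qu.
split => //.
have Lu u : dotv u u = 1 -> dotv u z = 0 -> Lr u = 0.
  move=> hu uz.
  set y := (3 / 5 : R) *: u + (4 / 5 : R) *: z.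
  have zu : dotv z u = 0 by rewrite dotvC.
  have hy : dotv y y = 1.
    rewrite /y !dotvDl !dotvDr !dotvZl !dotvZr hu uz zu hz; lra.
  have zy : dotv z y = 4 / 5.
    by rewrite /y dotvDr !dotvZr zu hz mulr0 add0r mulr1.
  have Qy : Qr y = (3 / 5) ^+ 2 * d%:R^-1.
    rewrite Q_perp dotvC zy /y addrK Q_scale Qu //.
  have Ly : Lr y = 3 / 5 * Lr u.
    by rewrite /y L_add !L_scale L_z mulr0 addr0.
  have := key y hy; rewrite Qy Ly zy ca2 cb2 => h.
  have e : d%:R / d.+1%:R * ((3 / 5) ^+ 2 * d%:R^-1) + d.+1%:R^-1 * (4 / 5) ^+ 2
      = d.+1%:R^-1 :> R.
    by field; rewrite ?D0 ?D1 ?D1'.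
  have h2 : ca * cb * Lr u = 0.
    have : 2 * ca * cb * (4 / 5) * (3 / 5 * Lr u) = 0.
      have h4 : d%:R / d.+1%:R * ((3 / 5) ^+ 2 * d%:R^-1) + 2 * ca * cb * (4 / 5) * (3 / 5 * Lr u) + d.+1%:R^-1 * (4 / 5) ^+ 2
        = d%:R / d.+1%:R * ((3 / 5) ^+ 2 * d%:R^-1) + 0 + d.+1%:R^-1 * (4 / 5) ^+ 2.
        by rewrite h addr0 e.
      by move/addIr/addrI: h4.
    move=> h3; have : 2 * (4 / 5) * (3 / 5) * (ca * cb * Lr u) = 0.
      by rewrite -h3; ring.
    by move/eqP; rewrite mulf_eq0 => /orP[|/eqP //]; rewrite mulf_eq0 mulf_eq0 ?(negbTE _); lra.
  have ca0 : ca != 0 by rewrite /ca gt_eqF // sqrtr_gt0 divr_gt0 // ltr0n.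
  have cb0 : cb != 0 by rewrite /cb invr_eq0 gt_eqF // sqrtr_gt0 ltr0n.
  by move/eqP: h2; rewrite !mulf_eq0 (negbTE ca0) (negbTE cb0) => /eqP.
move=> i.
have -> : (\int[mu]_x ((x : 'rV[R]_d.+1) 0 i)%:E)%E = (Lr (delta_mx 0 i))%:E.
  by rewrite -LE; apply: eq_integral => x _; rewrite dotv_delta.
set e := delta_mx 0 i : 'rV[R]_d.+1.
rewrite -(subrK (dotv e z *: z) e) L_add L_scale L_z mulr0 addr0.
rewrite (Lperp0 Lu) // dotvBl dotvZl hz mulr1 subrr.
by [].
Qed.
End main.

Unset Implicit Arguments.

Theorem lemma5p3 (R : realType) (d : nat) (hd : (0 < d)%N)
  (z : 'rV[R]_d.+1) (hz : dotv z z = 1)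
  (mu : probability (borelV R d.+1) R)
  (hmu : concentrated_on mu (usphere_perp z)) :
  (balanced mu /\ isotropic_perp d z mu) <-> isotropic (lift_measure z mu).
Proof.
split; [exact: (main_fwd hz hmu hd) | exact: (main_bwd hz hmu hd)].
Qed.
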